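(* Consider the fully discrete variable-step DLN scheme (with parameter $\theta\in[0,1]$) for the unsteady Stokes/Darcy model described in the context, on an arbitrary partition $0=t_0<\dots<t_N=T$, with given starting values $\underline{u}_h^0,\underline{u}_h^1\in\mathbf{V}_h$. Then for every $2\le M\le N$ the approximate solutions satisfy $$\tfrac14(1+\theta)\|\underline{u}_h^M\|_0^2+\tfrac14(1-\theta)\|\underline{u}_h^{M-1}\|_0^2+\sum_{n=1}^{M-1}\Big\|\sum_{j=0}^2\lambda_{j,n}\underline{u}_h^{n-1+j}\Big\|_0^2+C(\theta)\sum_{n=1}^{M-1}(k_n+k_{n-1})\|\underline{u}_{h,\beta}^n\|_{\mathbf U}^2$$ $$\le \tfrac14(1+\theta)\|\underline{u}_h^1\|_0^2+\tfrac14(1-\theta)\|\underline{u}_h^0\|_0^2+\widetilde C(\theta)\sum_{n=1}^{N-1}(k_n+k_{n-1})\|\mathbf F_\beta^n\|_{\mathbf U'}^2,$$ where $C(\theta),\widetilde C(\theta)\ge0$ are constants independent of the mesh size $h$ and the step sizes $k_n$.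
   Context: Domain: $\Omega=\Omega_f\cup\Omega_p\subset\mathbb{R}^d$ with fluid region $\Omega_f$, porous region $\Omega_p$, interface $\Gamma=\overline\Omega_f\cap\overline\Omega_p$, a unit normal $\mathbf n_s$ on $\Gamma$. Parameters: $\nu>0$, gravity $g>0$, storativity $S_0>0$, symmetric positive definite hydraulic conductivity $\mathbf K$, $\mu_{BJS}>0$, permeability $\Pi$ with $\mathbf K=\Pi g/\nu$. Spaces: $H_f=\{\mathbf v\in (H^1(\Omega_f))^d:\mathbf v=0 \text{ on }\partial\Omega_f\setminus\Gamma\}$, $H_p=\{\psi\in H^1(\Omega_p):\psi=0\text{ on }\partial\Omega_p\setminus\Gamma\}$, $\mathbf U=H_f\times H_p$, $Q_f=L^2(\Omega_f)$. For $\underline v=(\mathbf v,\psi)$, $\underline u=(\mathbf u,\phi)\in\mathbf U$: $\langle\underline u,\underline v\rangle_0=(\mathbf u,\mathbf v)_{\Omega_f}+gS_0(\phi,\psi)_{\Omega_p}$, $\|\underline v\|_0^2=\langle\underline v,\underline v\rangle_0$, $\|\underline v\|_{\mathbf U}^2=\nu(\nabla\mathbf v,\nabla\mathbf v)_{\Omega_f}+g(\mathbf K\nabla\psi,\nabla\psi)_{\Omega_p}$; $\mathbf U'$ the dual with $\|\mathbf F\|_{\mathbf U'}=\sup_{\underline v\ne0}\langle\mathbf F,\underline v\rangle_{\mathbf U'}/\|\underline v\|_{\mathbf U}$, where for $\mathbf F=(\mathbf F_1,F_2)$, $\langle \mathbf F,\underline v\rangle_{\mathbf U'}=(\mathbf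 F_1,\mathbf v)_{\Omega_f}+g(F_2,\psi)_{\Omega_p}$. Bilinear forms: $a(\underline u,\underline v)=\nu(\mathbb D(\mathbf u),\mathbb D(\mathbf v))_{\Omega_f}+\big(\frac{\mu_{BJS}\nu\sqrt d}{\sqrt{\mathrm{trace}(\Pi)}}P_\tau\mathbf u,\mathbf v\big)_\Gamma+g(\mathbf K\nabla\phi,\nabla\psi)_{\Omega_p}+g(\phi,\mathbf v\cdot\mathbf n_s)_\Gamma-g(\psi,\mathbf u\cdot\mathbf n_s)_\Gamma$, with $\mathbb D(\mathbf u)=\frac12(\nabla\mathbf u+\nabla\mathbf u^{T})$, $P_\tau\mathbf v=\mathbf v-(\mathbf v\cdot\mathbf n_s)\mathbf n_s$; $b(\underline v,q)=-(q,\nabla\cdot\mathbf v)_{\Omega_f}$. The paper asserts $a$ is continuous and coercive on $\mathbf U$: $a(\underline u,\underline u)\ge C_2\|\underline u\|_{\mathbf U}^2$. Discretization: finite element spaces $H_{fh}\subset H_f$, $Q_{fh}\subset Q_f$ (discrete inf-sup stable pair), $H_{ph}\subset H_p$, $\mathbf U_h=H_{fh}\times H_{ph}$, $V_{fh}=\{\mathbf v_h\in H_{fh}:(\nabla\cdot\mathbf v_h,q_h)=0\ \forall q_h\in Q_{fh}\}$, $\mathbf V_h=V_{fh}\times H_{ph}$. Time grid: $k_n=t_{n+1}-t_n$, $\epsilon_n=\frac{k_n-k_{n-1}}{k_n+k_{n-1}}$. DLN coefficients: $\alpha_2=\frac{1+\theta}{2}$, $\alpha_1=-\theta$, $\alpha_0=\frac{\theta-1}{2}$;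 $\beta_{2,n}=\frac14\big(1+\frac{1-\theta^2}{(1+\epsilon_n\theta)^2}+\epsilon_n^2\frac{\theta(1-\theta^2)}{(1+\epsilon_n\theta)^2}+\theta\big)$, $\beta_{1,n}=\frac12\big(1-\frac{1-\theta^2}{(1+\epsilon_n\theta)^2}\big)$, $\beta_{0,n}=\frac14\big(1+\frac{1-\theta^2}{(1+\epsilon_n\theta)^2}-\epsilon_n^2\frac{\theta(1-\theta^2)}{(1+\epsilon_n\theta)^2}-\theta\big)$; $\lambda_{1,n}=-\frac{\sqrt{\theta(1-\theta^2)}}{\sqrt2(1+\epsilon_n\theta)}$, $\lambda_{2,n}=-\frac{1-\epsilon_n}{2}\lambda_{1,n}$, $\lambda_{0,n}=-\frac{1+\epsilon_n}{2}\lambda_{1,n}$. Notation: $\underline u_{h,\beta}^n=\sum_{j=0}^2\beta_{j,n}\underline u_h^{n-1+j}$, $\mathbf F_\beta^n=\sum_{j=0}^2\beta_{j,n}\mathbf F(t_{n-1+j})$ for a given source $\mathbf F\in L^2(0,T;\mathbf U')$. Scheme: for $n=1,\dots,N-1$, find $\underline u_h^{n+1}\in\mathbf V_h$ such that for all $\underline v_h\in\mathbf V_h$: $\big\langle\frac{\alpha_2\underline u_h^{n+1}+\alpha_1\underline u_h^n+\alpha_0\underline u_h^{n-1}}{\alpha_2k_n-\alpha_0k_{n-1}},\underline v_h\big\rangle_0+a(\underline u_{h,\beta}^n,\underline v_h)=\langle\mathbf F_\beta^n,\underline v_h\rangle_{\mathbf U'}$. *)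

(* Defs.v *)
From mathcomp Require Import all_boot all_order all_algebra all_classical all_reals.
Import Order.TTheory GRing.Theory Num.Theory.
Set Implicit Arguments. Unset Strict Implicit. Unset Printing Implicit Defensive.
Local Open Scope ring_scope.
Local Open Scope classical_set_scope.

Section DLN.
Variable R : realType.

Definition dln_alpha (theta : R) (j : nat) : R :=
  match j with
  | 0 => (theta - 1) / 2
  | 1 => - theta
  | _ => (1 + theta) / 2
  end.

Definition dln_beta (theta eps : R) (j : nat) : R :=
  let q := (1 - theta ^+ 2) / (1 + eps * theta) ^+ 2 in
  match j with
  | 0 => (1 + q - eps ^+ 2 * theta * q - theta) / 4
  | 1 => (1 - q) / 2
  | _ => (1 + q + eps ^+ 2 * theta * q + theta) / 4
  end.

Definition dln_lambda1 (theta eps : R) : R :=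
  - Num.sqrt (theta * (1 - theta ^+ 2)) / (Num.sqrt 2 * (1 + eps * theta)).

Definition dln_lambda (theta eps : R) (j : nat) : R :=
  match j with
  | 0 => - (1 + eps) / 2 * dln_lambda1 theta eps
  | 1 => dln_lambda1 theta eps
  | _ => - (1 - eps) / 2 * dln_lambda1 theta eps
  end.

Definition step (t : nat -> R) (n : nat) : R := t n.+1 - t n.
Definition eps_n (t : nat -> R) (n : nat) : R :=
  (step t n - step t n.-1) / (step t n + step t n.-1).

Variable U : lmodType R.

Definition bilin_form (f : U -> U -> R) : Prop :=
  (forall (c : R) (x y z : U), f (c *: x + y) z = c * f x z + f y z) /\
  (forall (c : R) (x y z : U), f z (c *: x + y) = c * f z x + f z y).

Definition symm_bilin (f : U -> U -> R) : Prop := forall x y, f x y = f y x.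

Definition linear_functional (F : U -> R) : Prop :=
  forall (c : R) (x y : U), F (c *: x + y) = c * F x + F y.

Definition form_norm (f : U -> U -> R) (v : U) : R := Num.sqrt (f v v).

Definition dual_norm (nU : U -> U -> R) (F : U -> R) : R :=
  sup [set F v / form_norm nU v | v in [set v : U | v <> 0]].

Definition subspace (V : U -> Prop) : Prop :=
  V 0 /\ forall (c : R) (x y : U), V x -> V y -> V (c *: x + y).

Definition dln_comb (c : nat -> R) (u : nat -> U) (n : nat) : U :=
  \sum_(j < 3) c j *: u (n.-1 + j)%N.

Definition dln_src (c : nat -> R) (F : R -> U -> R) (t : nat -> R) (n : nat)
  : U -> R :=
  fun v => \sum_(j < 3) c j * F (t (n.-1 + j)%N) v.

End DLN.

(* Main.v *)
Require Import Defs.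
From mathcomp Require Import all_boot all_order all_algebra all_classical all_reals.
From mathcomp Require Import ring lra zify.
Import Order.TTheory GRing.Theory Num.Theory.
Local Open Scope ring_scope.

Section Helpers.
Variable R : realType.
Variable U : lmodType R.
Implicit Types f : U -> U -> R.

Lemma bl0l f : bilin_form f -> forall z, f 0 z = 0.
Proof. case=> H _ z; have := H 1 0 0 z; rewrite scale1r addr0 mul1r; lra. Qed.
Lemma bl0r f : bilin_form f -> forall z, f z 0 = 0.
Proof. case=> _ H z; have := H 1 0 0 z; rewrite scale1r addr0 mul1r; lra. Qed.
Lemma blDl f : bilin_form f -> forall x y z, f (x + y) z = f x z + f y z.
Proof. move=> Hf x y z; case: (Hf) => H _; have := H 1 x y z; rewrite scale1r mul1r //. Qed.
Lemma blDr f : bilin_form f -> forall x y z, f z (x + y) = f z x + f z y.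
Proof. move=> Hf x y z; case: (Hf) => _ H; have := H 1 x y z; rewrite scale1r mul1r //. Qed.
Lemma blZl f : bilin_form f -> forall c x z, f (c *: x) z = c * f x z.
Proof. move=> Hf c x z; case: (Hf) => H _; have := H c x 0 z; rewrite addr0 bl0l // addr0 //. Qed.
Lemma blZr f : bilin_form f -> forall c x z, f z (c *: x) = c * f z x.
Proof. move=> Hf c x z; case: (Hf) => _ H; have := H c x 0 z; rewrite addr0 bl0r // addr0 //. Qed.

Definition q9 (c d : nat -> R) (g : nat -> nat -> R) :=
  c 0 * d 0 * g 0 0 + c 0 * d 1 * g 0 1 + c 0 * d 2 * g 0 2
+ c 1 * d 0 * g 1 0 + c 1 * d 1 * g 1 1 + c 1 * d 2 * g 1 2
+ c 2 * d 0 * g 2 0 + c 2 * d 1 * g 2 1 + c 2 * d 2 * g 2 2.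

Lemma ip_comb3 f (c d : nat -> R) (x : nat -> U) : bilin_form f ->
  f (c 0 *: x 0 + c 1 *: x 1 + c 2 *: x 2) (d 0 *: x 0 + d 1 *: x 1 + d 2 *: x 2)
  = q9 c d (fun i j => f (x i) (x j)).
Proof.
move=> Hf; rewrite /q9 !(blDl _ Hf) !(blDr _ Hf) !(blZl _ Hf) !(blZr _ Hf); ring.
Qed.

Lemma comb3 (c : nat -> R) (u : nat -> U) n : (1 <= n)%N ->
  dln_comb c u n = c 0 *: u n.-1 + c 1 *: u n + c 2 *: u n.+1.
Proof.
move=> n1; rewrite /dln_comb !big_ord_recl big_ord0 addr0 /= addrA.
have e1 : (n.-1 + 1 = n)%N by rewrite addn1 prednK.
have e2 : (n.-1 + 2 = n.+1)%N by rewrite addn2 prednK.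
by rewrite /bump /= addn0 e1 e2.
Qed.

Lemma sub3 (V : U -> Prop) (c : nat -> R) x0 x1 x2 : subspace V ->
  V x0 -> V x1 -> V x2 -> V (c 0 *: x0 + c 1 *: x1 + c 2 *: x2).
Proof.
move=> [V0 HV] h0 h1 h2; rewrite -addrA; apply: (HV) => //; apply: (HV) => //.
by rewrite -[_ *: x2]addr0; apply: (HV).
Qed.

Lemma dln_id (th e : R) (g : nat -> nat -> R) : 0 <= th <= 1 -> 1 + e * th != 0 ->
  g 1 0 = g 0 1 -> g 2 0 = g 0 2 -> g 2 1 = g 1 2 ->
  q9 (dln_alpha th) (dln_beta th e) g =
  (1 + th) / 4 * g 2 2 - th / 2 * g 1 1 - (1 - th) / 4 * g 0 0
  + q9 (dln_lambda th e) (dln_lambda th e) g.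
Proof.
move=> /andP[t0 t1] w0 s10 s20 s21.
set L := dln_lambda1 th e.
have hL : L ^+ 2 = th * (1 - th ^+ 2) / (2 * (1 + e * th) ^+ 2).
  have hs : Num.sqrt (th * (1 - th ^+ 2)) ^+ 2 = th * (1 - th ^+ 2).
    by apply: sqr_sqrtr; apply: mulr_ge0 => //; nra.
  have hr : Num.sqrt (2 : R) ^+ 2 = 2 by apply: sqr_sqrtr; lra.
  have r0 : Num.sqrt (2 : R) != 0 by rewrite gt_eqF // sqrtr_gt0; lra.
  rewrite /L /dln_lambda1 -{2}hs -{2}hr; field.
  by rewrite r0 w0.
have -> : q9 (dln_lambda th e) (dln_lambda th e) g =
  L ^+ 2 * q9 (fun j => match j with 0 => - (1 + e) / 2 | 1 => 1 | _ => - (1 - e) / 2 end)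
              (fun j => match j with 0 => - (1 + e) / 2 | 1 => 1 | _ => - (1 - e) / 2 end) g.
  by rewrite /q9 /dln_lambda /= -/L; ring.
rewrite hL /q9 /dln_alpha /dln_beta /= s10 s20 s21; field.
by rewrite w0.
Qed.

Lemma final_ineq (C2 th kn kp P A G dn s : R) : 0 < C2 -> 0 <= th <= 1 -> 0 < kn -> 0 < kp ->
  ((1 + th) / 2 * kn + (1 - th) / 2 * kp)^-1 * P + A = G ->
  C2 * s ^+ 2 <= A -> G <= dn * s ->
  P + C2 * (1 - th) / 4 * ((kn + kp) * s ^+ 2) <= (2 * C2)^-1 * ((kn + kp) * dn ^+ 2).
Proof.
move=> c0 /andP[t0 t1] k0 k1 hE hA hG.
set D := (1 + th) / 2 * kn + (1 - th) / 2 * kp.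
have D0 : 0 < D by rewrite /D; nra.
have hP : P = D * (G - A).
  rewrite -hE addrK mulrA divff ?mul1r //; lra.
have h1 : P <= D * (dn * s - C2 * s ^+ 2).
  rewrite hP; apply: ler_wpM2l; lra.
have young : dn * s - C2 * s ^+ 2 <= (2 * C2)^-1 * dn ^+ 2 - C2 / 2 * s ^+ 2.
  rewrite -subr_ge0.
  have -> : (2 * C2)^-1 * dn ^+ 2 - C2 / 2 * s ^+ 2 - (dn * s - C2 * s ^+ 2)
     = (2 * C2)^-1 * (dn - C2 * s) ^+ 2 by field; lra.
  apply: mulr_ge0; [rewrite invr_ge0; lra | exact: sqr_ge0].
set X := (2 * C2)^-1 * dn ^+ 2 in young *.
set Y := C2 / 2 * s ^+ 2 in young *.
have X0 : 0 <= X by apply: mulr_ge0; [rewrite invr_ge0; lra | exact: sqr_ge0].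
have Y0 : 0 <= Y by apply: mulr_ge0; [lra | exact: sqr_ge0].
have h2 : P <= D * X - D * Y.
  rewrite -mulrBr; apply: le_trans h1 _; apply: ler_wpM2l; lra.
have h3 : D * X <= (kn + kp) * X by apply: ler_wpM2r => //; rewrite /D; nra.
have h4 : (1 - th) / 2 * (kn + kp) * Y <= D * Y by apply: ler_wpM2r => //; rewrite /D; nra.
have e1 : C2 * (1 - th) / 4 * ((kn + kp) * s ^+ 2) = (1 - th) / 2 * (kn + kp) * Y.
  by rewrite /Y; field.
have e2 : (2 * C2)^-1 * ((kn + kp) * dn ^+ 2) = (kn + kp) * X by rewrite /X; field; lra.
rewrite e1 e2; lra.
Qed.

Lemma dual_bound (nU : U -> U -> R) (G : U -> R) (c : R) : bilin_form nU ->
  (forall v, v <> 0 -> 0 < nU v v) -> linear_functional G ->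
  (forall v, G v <= c * form_norm nU v) ->
  forall v, G v <= dual_norm nU G * form_norm nU v.
Proof.
move=> Hb Hp Hl Hc v.
have [->|v0] := eqVneq v 0.
  have -> : G 0 = 0 by have := Hl 1 0 0; rewrite scale1r addr0 mul1r; lra.
  by rewrite /form_norm bl0l // sqrtr0 mulr0.
have fp : 0 < form_norm nU v by rewrite /form_norm sqrtr_gt0; apply: Hp; apply/eqP.
rewrite -ler_pdivrMr //; apply: sup_upper_bound; last by exists v => //; apply/eqP.
split; first by exists (G v / form_norm nU v); exists v => //; apply/eqP.
exists c => y [w /= w0 <-].
have wp : 0 < form_norm nU w by rewrite /form_norm sqrtr_gt0; apply: Hp.
by rewrite ler_pdivrMr.
Qed.

Lemma src3 (b : nat -> R) (F : R -> U -> R) (t : nat -> R) n v :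
  dln_src b F t n v = b 0 * F (t (n.-1 + 0)%N) v + b 1 * F (t (n.-1 + 1)%N) v
                      + b 2 * F (t (n.-1 + 2)%N) v.
Proof. by rewrite /dln_src !big_ord_recl big_ord0 /= addr0 addrA. Qed.

Lemma src_lin (b : nat -> R) (F : R -> U -> R) (t : nat -> R) n :
  (forall s, linear_functional (F s)) -> linear_functional (dln_src b F t n).
Proof. move=> Fl c x y; rewrite !src3 !Fl; ring. Qed.

Lemma src_bnd (nU : U -> U -> R) (b : nat -> R) (F : R -> U -> R) (t : nat -> R) n :
  (forall s, exists c : R, forall v, `|F s v| <= c * form_norm nU v) ->
  exists c, forall v, dln_src b F t n v <= c * form_norm nU v.
Proof.
move=> Fb.
have [c0 H0] := Fb (t (n.-1 + 0)%N).
have [c1 H1] := Fb (t (n.-1 + 1)%N).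
have [c2 H2] := Fb (t (n.-1 + 2)%N).
exists (`|b 0| * c0 + `|b 1| * c1 + `|b 2| * c2) => v.
have h : forall (bb c : R) w, `|w| <= c * form_norm nU v -> bb * w <= `|bb| * c * form_norm nU v.
  move=> bb c w hw; apply: le_trans (ler_norm _) _; rewrite normrM -mulrA.
  by apply: ler_wpM2l.
rewrite src3 !mulrDl.
have := h (b 0) _ _ (H0 v); have := h (b 1) _ _ (H1 v); have := h (b 2) _ _ (H2 v); lra.
Qed.

End Helpers.
Arguments q9 {R}.

Theorem theorem4p1 (R : realType) (U : lmodType R)
  (ip0 nU a : U -> U -> R) (theta : R) :
  bilin_form ip0 -> symm_bilin ip0 ->
  (forall v, v <> 0 -> 0 < ip0 v v) ->
  bilin_form nU -> symm_bilin nU ->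
  (forall v, v <> 0 -> 0 < nU v v) ->
  bilin_form a ->
  (exists Ca : R, forall u v,
      `|a u v| <= Ca * form_norm nU u * form_norm nU v) ->
  (exists C2 : R, 0 < C2 /\ forall u, C2 * nU u u <= a u u) ->
  0 <= theta <= 1 ->
  exists C Ct : R, 0 <= C /\ 0 <= Ct /\
  forall (Vh : U -> Prop) (N : nat) (t : nat -> R) (F : R -> U -> R)
         (u : nat -> U),
    subspace Vh ->
    t 0%N = 0 ->
    (forall n, (n < N)%N -> t n < t n.+1) ->
    (forall s, linear_functional (F s)) ->
    (forall s, exists c : R, forall v, `|F s v| <= c * form_norm nU v) ->
    (forall n, (n <= N)%N -> Vh (u n)) ->
    (forall n, (1 <= n)%N -> (n <= N.-1)%N ->
       forall v, Vh v ->
         ip0 ((dln_alpha theta 2 * step t n - dln_alpha theta 0 * step t n.-1)^-1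
                *: dln_comb (dln_alpha theta) u n) v
         + a (dln_comb (dln_beta theta (eps_n t n)) u n) v
         = dln_src (dln_beta theta (eps_n t n)) F t n v) ->
    forall M : nat, (2 <= M)%N -> (M <= N)%N ->
      (1 + theta) / 4 * ip0 (u M) (u M)
      + (1 - theta) / 4 * ip0 (u M.-1) (u M.-1)
      + \sum_(1 <= n < M)
          ip0 (dln_comb (dln_lambda theta (eps_n t n)) u n)
              (dln_comb (dln_lambda theta (eps_n t n)) u n)
      + C * \sum_(1 <= n < M)
          (step t n + step t n.-1)
          * form_norm nU (dln_comb (dln_beta theta (eps_n t n)) u n) ^+ 2
      <= (1 + theta) / 4 * ip0 (u 1%N) (u 1%N)
         + (1 - theta) / 4 * ip0 (u 0%N) (u 0%N)
         + Ct * \sum_(1 <= n < N)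
             (step t n + step t n.-1)
             * dual_norm nU (dln_src (dln_beta theta (eps_n t n)) F t n) ^+ 2.
Proof.
move=> ipb ips ipp nUb nUs nUp ab _ [C2 [C2p Hco]] th.
have /andP[t0 t1] := th.
exists (C2 * (1 - theta) / 4), ((2 * C2)^-1); split; [|split].
- apply: divr_ge0; [apply: mulr_ge0; lra | lra].
- rewrite invr_ge0; lra.
move=> Vh N t F u HV _ Ht Flin Fbd Hu Hsch M HM2 HMN.
pose En := fun k => (1 + theta) / 4 * ip0 (u k) (u k) + (1 - theta) / 4 * ip0 (u k.-1) (u k.-1).
have nUge : forall v, 0 <= nU v v.
  move=> v; have [->|v0] := eqVneq v 0; first by rewrite (@bl0l _ _ _ nUb).
  by apply/ltW/nUp/eqP.
have step_ineq : forall n, (1 <= n)%N -> (n < N)%N ->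
  En n.+1 - En n
  + ip0 (dln_comb (dln_lambda theta (eps_n t n)) u n)
        (dln_comb (dln_lambda theta (eps_n t n)) u n)
  + C2 * (1 - theta) / 4 * ((step t n + step t n.-1)
          * form_norm nU (dln_comb (dln_beta theta (eps_n t n)) u n) ^+ 2)
  <= (2 * C2)^-1 * ((step t n + step t n.-1)
             * dual_norm nU (dln_src (dln_beta theta (eps_n t n)) F t n) ^+ 2).
  move=> n n1 nN.
  have kn : 0 < step t n by rewrite subr_gt0; apply: Ht.
  have kp : 0 < step t n.-1.
    have h : (n.-1 < N)%N by lia.
    by have := Ht _ h; rewrite /step prednK // subr_gt0.
  set e := eps_n t n.
  have w : 0 < 1 + e * theta.
    have -> : 1 + e * theta = (step t n * (1 + theta) + step t n.-1 * (1 - theta))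
                              / (step t n + step t n.-1).
      by rewrite /e /eps_n; field; lra.
    apply: divr_gt0; nra.
  pose x := fun i => match i with 0 => u n.-1 | 1 => u n | _ => u n.+1 end.
  have hb : Vh (dln_comb (dln_beta theta e) u n).
    rewrite comb3 //; apply: sub3 => //; apply: Hu; lia.
  have hs := Hsch n n1 ltac:(lia) _ hb.
  rewrite (@blZl _ _ _ ipb) in hs.
  have hD : dln_alpha theta 2 * step t n - dln_alpha theta 0 * step t n.-1
     = (1 + theta) / 2 * step t n + (1 - theta) / 2 * step t n.-1.
    by rewrite /dln_alpha /=; ring.
  rewrite hD in hs.
  have hid : ip0 (dln_comb (dln_alpha theta) u n) (dln_comb (dln_beta theta e) u n)
      = En n.+1 - En n + ip0 (dln_comb (dln_lambda theta e) u n)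
                             (dln_comb (dln_lambda theta e) u n).
    rewrite !comb3 //.
    have E1 : ip0 (dln_alpha theta 0 *: u n.-1 + dln_alpha theta 1 *: u n + dln_alpha theta 2 *: u n.+1)
      (dln_beta theta e 0 *: u n.-1 + dln_beta theta e 1 *: u n + dln_beta theta e 2 *: u n.+1)
      = q9 (dln_alpha theta) (dln_beta theta e) (fun i j => ip0 (x i) (x j)).
      exact: (@ip_comb3 _ _ ip0 _ _ x ipb).
    have E2 : ip0 (dln_lambda theta e 0 *: u n.-1 + dln_lambda theta e 1 *: u n + dln_lambda theta e 2 *: u n.+1)
      (dln_lambda theta e 0 *: u n.-1 + dln_lambda theta e 1 *: u n + dln_lambda theta e 2 *: u n.+1)
      = q9 (dln_lambda theta e) (dln_lambda theta e) (fun i j => ip0 (x i) (x j)).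
      exact: (@ip_comb3 _ _ ip0 _ _ x ipb).
    rewrite E1 E2 dln_id //; try exact: ips; try by rewrite gt_eqF.
    rewrite /En /=; move: (q9 _ _ _) (ip0 (u n.+1) _) (ip0 (u n) _) (ip0 (u n.-1) _) => Q g2 g1 g0.
by field.
  rewrite -hid.
  have [cb Hcb] := @src_bnd _ _ nU (dln_beta theta e) F t n Fbd.
  apply: (@final_ineq _ C2 theta _ _ _ _ _ _ _ C2p th kn kp hs).
  - rewrite sqr_sqrtr //; exact: Hco.
  - apply: (@dual_bound _ _ nU _ _ nUb nUp (@src_lin _ _ _ _ _ _ Flin) Hcb).
have S : \sum_(1 <= n < M) (En n.+1 - En n
  + ip0 (dln_comb (dln_lambda theta (eps_n t n)) u n)
        (dln_comb (dln_lambda theta (eps_n t n)) u n)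
  + C2 * (1 - theta) / 4 * ((step t n + step t n.-1)
          * form_norm nU (dln_comb (dln_beta theta (eps_n t n)) u n) ^+ 2))
  <= \sum_(1 <= n < M) (2 * C2)^-1 * ((step t n + step t n.-1)
             * dual_norm nU (dln_src (dln_beta theta (eps_n t n)) F t n) ^+ 2).
  apply: ler_sum_nat => i /andP[i1 iM]; apply: step_ineq => //; lia.
rewrite big_split big_split telescope_sumr ?(ltnW HM2) // -!mulr_sumr in S.
have ext : \sum_(1 <= n < M) ((step t n + step t n.-1)
             * dual_norm nU (dln_src (dln_beta theta (eps_n t n)) F t n) ^+ 2)
   <= \sum_(1 <= n < N) ((step t n + step t n.-1)
             * dual_norm nU (dln_src (dln_beta theta (eps_n t n)) F t n) ^+ 2).
  rewrite [X in _ <= X](@big_cat_nat _ _ _ M) /= ?(ltnW HM2) //.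
  rewrite lerDl big_nat_cond; apply: sumr_ge0 => i /andP[/andP[iM iN] _]; apply: mulr_ge0; last exact: sqr_ge0.
  have kn : 0 < step t i by rewrite subr_gt0; apply: Ht; lia.
  have kp : 0 < step t i.-1.
    have h : (i.-1 < N)%N by lia.
    by have := Ht _ h; rewrite /step prednK ?subr_gt0 //; lia.
  lra.
have Ct0 : 0 <= (2 * C2)^-1 by rewrite invr_ge0; lra.
have ext2 := ler_wpM2l Ct0 ext.
move: S ext2; rewrite /En /=; lra.
Qed.
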